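(* Let $(P_1,\dots,P_J)$ be a stochastic demand system with vector representation $\pi\in\mathbf{R}^{\sum_j I_j}$, and let $A$ be the rational demand matrix, with $H$ columns. Then $(P_1,\dots,P_J)$ is stochastically rationalizable if and only if $\pi=A\nu$ for some $\nu$ in the unit simplex $\Delta^{H-1}=\{\nu\in\mathbf{R}^H:\nu\ge 0,\ \mathbf{1}_H'\nu=1\}$. Furthermore, this holds if and only if $\pi=A\nu$ for some $\nu\in\mathbf{R}^H$ with $\nu\ge 0$.
   Context: Fix integers $K\ge 1$ and $J\ge1$, price vectors $p_1,\dots,p_J\in\mathbf{R}^K_{++}$, and budget planes $\mathcal{B}_j=\{y\in\mathbf{R}^K_+:p_j'y=1\}$. A point $x$ is on, strictly above, or strictly below $\mathcal{B}_j$ according as $p_j'x=1$, $>1$, $<1$. A demand vector $d=(d_1,\dots,d_J)\in\mathcal{B}_1\times\cdots\times\mathcal{B}_J$ is rationalizable if there is a strictly increasing $u:\mathbf{R}^K_+\to\mathbf{R}$ with $d_j\in\arg\max_{x\in\mathcal{B}_j}u(x)$ for all $j$. A stochastic demand system is $(P_1,\dots,P_J)$ with $P_j$ a probability distribution on $\mathcal{B}_j$; it is stochastically rationalizable if some probability distribution on $\mathcal{B}_1\times\cdots\times\mathcal{B}_J$ concentrated on rationalizable demand vectors has $j$-th marginal $P_j$ for all $j$. Patches: the coarsest partition of $\bigcup_j\mathcal{B}_j$ such that each $\mathcal{B}_j$ is a union of cells and each cell is, for every $j$, entirely on, entirely strictly above, or entirely strictly below $\mathcal{B}_j$ (equivalently,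 cells are the nonempty sets of points with a common sign vector $(\mathrm{sign}(p_j'x-1))_j$). For each patch $x$ fix a representative $y^*(x)\in x$. For each $j$ list the patches contained in $\mathcal{B}_j$ (in an arbitrary fixed order) as $x_{1|j},\dots,x_{I_j|j}$; a patch lying on several budget planes appears in several lists. The vector representation of $(P_1,\dots,P_J)$ is the vector $\pi$ of length $\sum_j I_j$ consisting of $J$ consecutive blocks, the $j$-th block being $(P_j(x_{1|j}),\dots,P_j(x_{I_j|j}))$. The rational demand matrix $A$ is the matrix whose columns are exactly (each once, in some order) the binary vectors $a$ of length $\sum_j I_j$ that have exactly one entry equal to $1$ in each block, say at position $i_j$ in block $j$, and for which the demand vector $(y^*(x_{i_1|1}),\dots,y^*(x_{i_J|J}))$ is rationalizable; $H$ denotes its number of columns. *)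

(* Defs.v *)
From HB Require Import structures.
From mathcomp Require Import all_boot all_order all_algebra.
From mathcomp Require Import all_classical all_reals all_analysis.

Set Implicit Arguments.
Unset Strict Implicit.
Unset Printing Implicit Defensive.

Import Order.TTheory GRing.Theory Num.Theory.
Local Open Scope classical_set_scope.
Local Open Scope ring_scope.

(* Points of R^K are K-tuples of reals; R^K carries the product (Borel)
   sigma-algebra generated by the coordinate projections (library instance
   on n.-tuple T). *)

Section RevealedStochasticPreference.
Variables (R : realType) (K J : nat) (p : 'I_J -> K.-tuple R).

Definition point := K.-tuple R.
Definition demand := J.-tuple (K.-tuple R).

Definition dot (q x : point) : R := \sum_(k < K) tnth q k * tnth x k.

Definition nonneg (x : point) : Prop := forall k, 0 <= tnth x k.

Definition budget (j : 'I_J) : set point :=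
  [set x | nonneg x /\ dot (p j) x = 1].

Definition side (j : 'I_J) (x : point) : option bool :=
  if dot (p j) x == 1 then None else Some (1 < dot (p j) x).

(* sign vectors (sign(p_j'x - 1))_j *)
Definition signvec := {ffun 'I_J -> option bool}.

Definition cell (s : signvec) : set point :=
  [set x | nonneg x /\ forall j, side j x = s j].

(* s indexes a patch: its cell is nonempty and lies in the union of the
   budget planes *)
Definition is_patch (s : signvec) : Prop :=
  (exists j, s j = None) /\ cell s !=set0.

Definition patch_onb (j : 'I_J) (s : signvec) : bool :=
  (s j == None) && `[< cell s !=set0 >].

Definition strictly_increasing (u : point -> R) : Prop :=
  forall x y : point, nonneg x -> nonneg y ->
    (forall k, tnth x k <= tnth y k) -> x != y -> u x < u y.

Definition rationalizable (d : demand) : Prop :=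
  exists u : point -> R, strictly_increasing u /\
    forall j : 'I_J, budget j (tnth d j) /\
      (forall x, budget j x -> u x <= u (tnth d j)).

Definition stoch_demand_system (P : 'I_J -> probability point R) : Prop :=
  forall j, P j (budget j) = 1%E.

Definition stoch_rationalizable (P : 'I_J -> probability point R) : Prop :=
  exists Q : probability demand R,
    (forall (j : 'I_J) (B : set point), measurable B ->
       Q ((fun d : demand => tnth d j) @^-1` B) = P j B) /\
    exists S : set demand, [/\ measurable S, S `<=` rationalizable &
                              Q S = 1%E].

(* Enumerated (via enum_val) in the order of the product 'I_J * signvec,
   which is j-major, so the rows form J consecutive blocks, the j-th block
   listing the patches x_{1|j},...,x_{I_j|j} contained in B_j. *)
Definition rowT := {js : 'I_J * signvec | patch_onb js.1 js.2}.

Definition nrows := #|{: rowT}|.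

Definition vecrep (P : 'I_J -> probability point R) : 'cV[R]_nrows :=
  \col_(i < nrows) let r := val (@enum_val rowT predT i) in
                   fine (P r.1 (cell r.2)).

(* Selections of one patch in each B_j (= binary vectors with exactly one 1
   per block), for which the demand vector of representatives
   (y*(x_{i_1|1}),...,y*(x_{i_J|J})) is rationalizable; y is the fixed
   choice of representatives y*. *)
Definition colT (y : signvec -> point) :=
  {sel : {ffun 'I_J -> signvec} |
     [forall j, patch_onb j (sel j)] &&
     `[< rationalizable [tuple y (sel j) | j < J] >]}.

Definition ncols (y : signvec -> point) := #|{: colT y}|.

Definition ratdemand (y : signvec -> point) : 'M[R]_(nrows, ncols y) :=
  \matrix_(i < nrows, h < ncols y)
    let r := val (@enum_val rowT predT i) in
    let c := val (@enum_val (colT y) predT h) in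
    if c r.1 == r.2 then 1 else 0.

End RevealedStochasticPreference.

(* Main.v *)
Require Import Defs.
From HB Require Import structures.
From mathcomp Require Import all_boot all_order all_algebra.
From mathcomp Require Import all_classical all_reals all_analysis.
From mathcomp.algebra_tactics Require Import ring lra.
From mathcomp Require Import zify.
From mathcomp Require Import giry.

Import Order.TTheory GRing.Theory Num.Theory.
Local Open Scope classical_set_scope.
Local Open Scope ring_scope.
Section Comb.
Variables (R : realType) (K J : nat) (p : 'I_J -> K.-tuple R).
Hypothesis hK : (0 < K)%N.
Hypothesis hp : forall j k, 0 < tnth (p j) k.

Definition lepb (x y : K.-tuple R) := [forall k, tnth x k <= tnth y k].

Lemma sum_lt (f g : 'I_K -> R) : (forall k, f k <= g k) -> (exists k, f k < g k) ->
  \sum_k f k < \sum_k g k.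
Proof.
move=> le [k0 lt0]; rewrite (bigD1 k0) //= [X in _ < X](bigD1 k0) //=.
by apply: ltr_leD => //; apply: ler_sum => k _.
Qed.

Lemma dot_le j x y : lepb x y -> dot (p j) x <= dot (p j) y.
Proof.
move=> /forallP le; apply: ler_sum => k _; apply: ler_wpM2l => //.
exact: ltW.
Qed.

Lemma dot_lt j x y : lepb x y -> x != y -> dot (p j) x < dot (p j) y.
Proof.
move=> /forallP le ne; apply: sum_lt.
  by move=> k; apply: ler_wpM2l => //; exact: ltW.
have [k0 hk0] : exists k, tnth x k != tnth y k.
  apply/existsP; apply: contraT; rewrite negb_exists => /forallP h.
  by move: ne; rewrite (eq_from_tnth (fun k => eqP (negbNE (h k)))) eqxx.
exists k0; rewrite ltr_pM2l //; by rewrite lt_neqAle hk0 le.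
Qed.

Arguments dot_le j {x y}.
Arguments dot_lt j {x y}.

Lemma side_leT j x : dot (p j) x <= 1 -> side p j x != Some true.
Proof. by rewrite /side; case: ifP => // _ h; rewrite ltNge h. Qed.

Lemma side_ltF j x : dot (p j) x < 1 -> side p j x = Some false.
Proof. by move=> h; rewrite /side lt_eqF // ltNge ltW. Qed.

Lemma side_notT j x : side p j x != Some true -> dot (p j) x <= 1.
Proof. by rewrite /side; case: ifP => [/eqP->//|_]; case: ltrP. Qed.

Lemma side_F j x : side p j x = Some false -> dot (p j) x < 1.
Proof.
rewrite /side; case: ifP => // /negbT ne [] /negbT; rewrite -leNgt => le.
by rewrite lt_neqAle ne le.
Qed.

Lemma bigmax_witness (I : finType) (P : pred I) (F : I -> nat) :
  (0 < \max_(i | P i) F i)%N -> exists2 i, P i & \max_(i | P i) F i = F i.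
Proof.
case: (pickP P) => [i0 Pi0 _|P0]; last by rewrite big_pred0.
rewrite (bigop.bigmax_eq_arg _ Pi0); case: arg_maxnP => //= i Pi _; by exists i.
Qed.

Arguments bigmax_witness {I P F}.

Lemma rat_cmp (d : demand R K J) (u : K.-tuple R -> R) :
  strictly_increasing u ->
  (forall j, budget p j (tnth d j) /\
      (forall x, budget p j x -> u x <= u (tnth d j))) ->
  forall i j, (side p j (tnth d i) != Some true -> u (tnth d i) <= u (tnth d j)) /\
         (side p j (tnth d i) = Some false -> u (tnth d i) < u (tnth d j)).
Proof.
move=> su hu i j.
have strict : side p j (tnth d i) = Some false -> u (tnth d i) < u (tnth d j).
  move=> /side_F lt1.
  set di := tnth d i.
  have [[ndi _] _] := hu i.
  pose k0 := Ordinal hK.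
  pose t := (1 - dot (p j) di) / tnth (p j) k0.
  have t0 : 0 < t by apply: divr_gt0 => //; rewrite subr_gt0.
  pose z := [tuple tnth di k + (if k == k0 then t else 0) | k < K].
  have tz k : tnth z k = tnth di k + (if k == k0 then t else 0).
    by rewrite tnth_mktuple.
  have bz : budget p j z.
    split.
      move=> k; rewrite tz; apply: addr_ge0 => //; case: ifP => // _; exact: ltW.
    rewrite /dot; under eq_bigr => k _ do rewrite tz mulrDr.
    rewrite big_split /= [X in _ + X](bigD1 k0) //=.
    rewrite [X in _ + (_ + X)]big1 ?addr0; last first.
      by move=> k /negbTE ->; rewrite mulr0.
    rewrite -/(dot (p j) di) /t.
    by rewrite mulrCA divff ?mulr1 ?subrKC // gt_eqF.
  apply: (@lt_le_trans _ _ (u z)); last by apply: (proj2 (hu j)).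
  apply: su => //.
  - by case: bz.
  - by move=> k; rewrite tz lerDl; case: ifP => // _; exact: ltW.
  - apply/eqP => e; have := congr1 (fun w => tnth w k0) e.
    rewrite /= tz eqxx => h; lra.
split => // /side_notT le1.
have [e|ne] := eqVneq (dot (p j) (tnth d i)) 1.
  apply: (proj2 (hu j)); split => //; by case: (proj1 (hu i)).
by apply/ltW/strict/side_ltF; rewrite lt_neqAle ne le1.
Qed.

Lemma transfer (d d' : demand R K J) : rationalizable p d ->
  (forall j, budget p j (tnth d' j)) ->
  (forall i j, side p j (tnth d' i) = side p j (tnth d i)) ->
  rationalizable p d'.
Proof.
case=> u [su hu] bd' hs.
have cmp := @rat_cmp d u su hu.
pose rk i := #|[set k | u (tnth d k) < u (tnth d i)]%SET|.
have rk_le i j : u (tnth d i) <= u (tnth d j) -> (rk i <= rk j)%N.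
  move=> h; apply: subset_leq_card; apply/fintype.subsetP => k; rewrite !inE => hk.
  exact: lt_le_trans hk h.
have rk_lt i j : u (tnth d i) < u (tnth d j) -> (rk i < rk j)%N.
  move=> h; apply: proper_card; apply/properP; split.
    apply/fintype.subsetP => k; rewrite !inE => hk; exact: lt_trans hk h.
  by exists i; rewrite !inE ?h ?ltxx.
have key i j : dot (p j) (tnth d' i) <= 1 -> (rk i <= rk j)%N.
  move=> /side_leT; rewrite hs => h; exact/rk_le/(proj1 (cmp i j)).
have keys i j : dot (p j) (tnth d' i) < 1 -> (rk i < rk j)%N.
  move=> /side_ltF; rewrite hs => h; exact/rk_lt/(proj2 (cmp i j)).
have dotd' j : dot (p j) (tnth d' j) = 1 by case: (bd' j).
have lepbxx x : lepb x x by apply/forallP => k.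
have lepb_trans x y z : lepb x y -> lepb y z -> lepb x z.
  move=> /forallP h1 /forallP h2; apply/forallP => k; exact: le_trans (h1 k) (h2 k).
pose F x := \max_(i | lepb (tnth d' i) x) (rk i).+1.
have Fge x i : lepb (tnth d' i) x -> ((rk i).+1 <= F x)%N.
  exact: (@leq_bigmax_cond _ (fun i => lepb (tnth d' i) x) (fun i => (rk i).+1) i).
have Fub x j : dot (p j) x <= 1 -> (F x <= (rk j).+1)%N.
  move=> h; apply/bigmax_leqP => i hi; rewrite ltnS; apply: key.
  exact: le_trans (dot_le j hi) h.
have Fd' j : F (tnth d' j) = (rk j).+1.
  apply/eqP; rewrite eqn_leq Fub ?dotd' //.
  exact: Fge.
have Fmono x y : lepb x y -> (F x <= F y)%N.
  move=> hxy; apply/bigmax_leqP => i hi.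
  exact: Fge (lepb_trans _ _ _ hi hxy).
pose s (x : K.-tuple R) := \sum_(k < K) tnth x k.
pose g (x : K.-tuple R) := if [exists i, x == tnth d' i] then 0 else s x / (1 + s x).
have s0 x : nonneg x -> 0 <= s x by move=> h; apply: sumr_ge0 => k _.
have g0 x : nonneg x -> 0 <= g x.
  move=> h; rewrite /g; case: ifP => // _; apply: divr_ge0; first exact: s0.
  by apply: addr_ge0 => //; exact: s0.
have g1 x : nonneg x -> g x < 1.
  move=> h; rewrite /g; case: ifP => // _; rewrite ltr_pdivrMr ?mul1r ?ltrDr //.
  by apply: ltr_pwDl => //; exact: s0.
exists (fun x => (2 * F x)%:R + g x); split.
  move=> x z nx nz lxz nxz.
  have lb : lepb x z by apply/forallP.
  have := Fmono _ _ lb; rewrite leq_eqVlt => /orP[/eqP eF|ltF]; last first.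
    apply: (@lt_le_trans _ _ (2 * F x).+1%:R).
      by rewrite -natr1 ltrD2l g1.
    rewrite -[X in X <= _]addr0; apply: lerD; last exact: g0.
    by rewrite ler_nat; lia.
  rewrite eF ltrD2l.
  have zD : ~~ [exists i, z == tnth d' i].
    apply/negP => /existsP [i /eqP zi].
    have Fz : (0 < F z)%N.
      by apply: (leq_trans _ (Fge z i _)); rewrite ?zi.
    rewrite -eF in Fz; have [k hk Fk] := bigmax_witness Fz.
    have : (rk k < rk i)%N.
      apply: keys; rewrite -(dotd' i) -zi; apply: dot_lt.
        exact: lepb_trans hk lb.
      apply/negP => /eqP ekz; apply/negP: nxz; apply/negPn/eqP/eq_from_tnth => m.
      apply/le_anti; rewrite (forallP lb m) /=; rewrite -ekz; exact: (forallP hk).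
    have : ((rk i).+1 <= F z)%N.
      by apply: Fge; rewrite zi.
    rewrite -eF -/(F x) /F Fk; lia.
  have sxz : s x < s z.
    apply: sum_lt => [k|]; first exact: lxz.
    have [k0 hk0] : exists k, tnth x k != tnth z k.
      apply/existsP; apply: contraT; rewrite negb_exists => /forallP h.
      by move: nxz; rewrite (eq_from_tnth (fun k => eqP (negbNE (h k)))) eqxx.
    by exists k0; rewrite lt_neqAle hk0 lxz.
  rewrite /g (negbTE zD).
  have sx := s0 _ nx.
  have gx : g x <= s x / (1 + s x).
    rewrite /g; case: ifP => // _; apply: divr_ge0 => //; lra.
  apply: (le_lt_trans gx).
  rewrite ltr_pdivrMr; last by lra.
  rewrite mulrAC ltr_pdivlMr; last by lra.
  nra.
move=> j; split; first exact: bd'.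
move=> x bx; have [nx dx] := bx.
rewrite Fd'; have := Fub x j; rewrite dx lexx => /(_ isT).
rewrite leq_eqVlt => /orP[/eqP eF|ltF]; last first.
  apply/ltW; apply: (@lt_le_trans _ _ (2 * F x).+1%:R).
    by rewrite -natr1 ltrD2l g1.
  rewrite -[X in X <= _]addr0; apply: lerD; last by apply: g0; case: (bd' j).
  by rewrite ler_nat; lia.
have Fx : (0 < F x)%N by rewrite eF.
have [i hi Fi] := bigmax_witness Fx.
have xi : x = tnth d' i.
  apply/eqP; apply: contraT => ne.
  have : (rk i < rk j)%N.
    apply: keys; rewrite -dx; apply: dot_lt => //; by rewrite eq_sym.
  by move: eF; rewrite /F Fi => -[->]; rewrite ltnn.
have gx : g x = 0 by rewrite /g; case: ifP => //; rewrite xi => /existsP; case; exists i.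
rewrite gx eF addr0 -[X in X <= _]addr0; apply: lerD => //.
by apply: g0; case: (bd' j).
Qed.

End Comb.
Section MeasAux.
Local Open Scope ereal_scope.
Context {d} {T : measurableType d} {R : realType}.

Lemma mfin (mu : {measure set T -> \bar R}) (I : finType) (P : {pred I})
  (F : I -> set T) :
  (forall i, measurable (F i)) ->
  (forall i j, i != j -> F i `&` F j = set0) ->
  mu (\bigcup_(i in [set` P]) F i) = \sum_(i | P i) mu (F i).
Proof.
move=> mF dF; rewrite measure_fin_bigcup //.
- rewrite (@bigfs _ _ _ _ (index_enum I)) //; first exact: index_enum_uniq.
  by move=> i _; rewrite mem_index_enum.
- move=> i j _ _ [x [Fi Fj]]; apply/eqP; apply: contraT => /dF e.
  by have : (F i `&` F j) x by []; rewrite e.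
Qed.

Lemma measurable_preT n (A : set T) (i : 'I_n) : measurable A ->
  measurable ((fun t : n.-tuple T => tnth t i) @^-1` A).
Proof.
move=> mA; rewrite -[X in measurable X]setTI.
exact: (measurable_tnth i).
Qed.

Definition box n (A : 'I_n -> set T) : set (n.-tuple T) :=
  [set t | forall i, A i (tnth t i)].

Arguments box {n}.

Lemma measurable_box n (A : 'I_n -> set T) : (forall i, measurable (A i)) ->
  measurable (box A).
Proof.
move=> mA.
have -> : box A = \bigcap_(i in [set: 'I_n]) ((fun t => tnth t i) @^-1` A i).
  apply/seteqP; split => t /= h i; first by move=> _; exact: h.
  exact: (h i I).
apply: fin_bigcap_measurable => // i _; exact: measurable_preT.
Qed.

Lemma mcons n : measurable_fun [set: T * n.-tuple T]
  (fun xt : T * n.-tuple T => [the n.+1.-tuple T of xt.1 :: xt.2]).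
Proof. exact: measurable_cons. Qed.

Fixpoint prodm (n : nat) : ('I_n -> subprobability T R) ->
  subprobability (n.-tuple T) R :=
  match n with
  | 0 => fun _ => giry_ret [tuple]
  | n'.+1 => fun mu => giry_map (@mcons n')
      (product_subprobability (mu ord0, prodm n' (fun i => mu (lift ord0 i))))
  end.
Arguments prodm {n}.

Lemma prodm_box n (mu : 'I_n -> subprobability T R) (A : 'I_n -> set T) :
  (forall i, measurable (A i)) ->
  prodm mu (box A) = \prod_(i < n) mu i (A i).
Proof.
elim: n mu A => [|n IH] mu A mA.
  rewrite big_ord0 /= /giry_ret diracE.
  by have -> : [tuple] \in box A by rewrite inE => -[].
rewrite big_ord_recl /=.
rewrite -(IH (fun i => mu (lift ord0 i)) (fun i => A (lift ord0 i))) //.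
rewrite /pushforward.
have -> : (fun xt : T * n.-tuple T => cons_tuple xt.1 xt.2) @^-1` box A
   = A ord0 `*` box (fun i => A (lift ord0 i)).
  apply/seteqP; split.
    by move=> [x t] /= h; split; [exact: (h ord0)|move=> i; have := h (lift ord0 i); rewrite tnthS].
  move=> [x t] [/= h0 h] i; case: (unliftP ord0 i) => [j ->|->].
    by rewrite tnthS; exact: h.
  by rewrite tnth0.
rewrite [LHS]product_measure1E //; exact: measurable_box.
Qed.

End MeasAux.
Arguments box {d T n}.
Arguments prodm {d T R n}.
Section Mix.
Local Open Scope ereal_scope.
Context {d} {T : measurableType d} {R : realType} {I : finType} (w : I -> R)
  (m : {measure set T -> \bar R}) (E : I -> set T).

Definition mmix (hw : forall i, (0 <= w i)%R) (mE : forall i, measurable (E i))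
  (A : set T) : \bar R := \sum_(i : I) (w i)%:E * m (A `&` E i).

Variables (hw : forall i, (0 <= w i)%R) (mE : forall i, measurable (E i)).

Let mmix0 : mmix hw mE set0 = 0.
Proof. by rewrite /mmix big1 // => i _; rewrite set0I measure0 mule0. Qed.

Let mmix_ge0 A : 0 <= mmix hw mE A.
Proof. by rewrite /mmix; apply: sume_ge0 => i _; rewrite mule_ge0 ?lee_fin. Qed.

Let mmix_sigma_additive : semi_sigma_additive (mmix hw mE).
Proof.
move=> F mF tF mUF; rewrite [X in _ --> X](_ : _ =
    lim ((fun n => \sum_(0 <= i < n) mmix hw mE (F i)) @ \oo)).
  by apply: is_cvg_ereal_nneg_natsum => k _.
rewrite /mmix nneseries_sum; last by move=> i j _; rewrite mule_ge0 ?lee_fin.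
apply: eq_bigr => i _.
rewrite nneseriesZl; last by move=> k _.
congr (_ * _); rewrite setI_bigcupl measure_semi_bigcup //.
- by move=> k; apply: measurableI.
- apply/trivIsetP => a b _ _ ab.
  by move/trivIsetP: tF => tF; rewrite setIACA setIid tF ?set0I.
- by rewrite -setI_bigcupl; apply: measurableI.
Qed.

HB.instance Definition _ := isMeasure.Build _ _ _ (mmix hw mE)
  mmix0 mmix_ge0 mmix_sigma_additive.

End Mix.

Lemma mnormalizeE {d} {T : measurableType d} {R : realType}
  (mu : {measure set T -> \bar R}) (P0 : probability T R) A :
  mu setT = 1%E -> mnormalize mu P0 A = mu A.
Proof.
by move=> h; rewrite /mnormalize h /= onee_eq0 /= invr1 mule1.
Qed.
Section Main.
Variables (R : realType) (K J : nat) (p : 'I_J -> K.-tuple R).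
Hypothesis hK : (0 < K)%N.
Hypothesis hp : forall j k, 0 < tnth (p j) k.
Variable y : signvec J -> K.-tuple R.
Hypothesis hy : forall s, is_patch p s -> cell p s (y s).

Definition sig (x : K.-tuple R) : signvec J := [ffun j => side p j x].

Definition E (sel : {ffun 'I_J -> signvec J}) : set (demand R K J) :=
  box (fun j => cell p (sel j)).

Lemma measurable_dot (q : K.-tuple R) :
  measurable_fun setT (fun x : K.-tuple R => dot q x).
Proof.
rewrite /dot; apply: measurable_sum => k.
apply: measurable_realfun.measurable_funM; first exact: measurable_cst.
exact: measurable_tnth.
Qed.

Lemma measurable_side j v : measurable [set x : K.-tuple R | side p j x = v].
Proof.
have -> : [set x : K.-tuple R | side p j x = v] =
  (fun x => dot (p j) x) @^-1` [set r : R | (if r == 1 then None else Some (1 < r)) = v].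
  by [].
rewrite -[X in measurable X]setTI; apply: measurable_dot => //.
case: v => [[]|].
- have -> : [set r : R | (if r == 1 then None else Some (1 < r)) = Some true] =
     `]1, +oo[%classic.
    apply/seteqP; split => r /=; rewrite in_itv /= andbT.
      by case: ifP => // _ [].
    by move=> h; rewrite gt_eqF // h.
  exact: measurable_itv.
- have -> : [set r : R | (if r == 1 then None else Some (1 < r)) = Some false] =
     `]-oo, 1[%classic.
    apply/seteqP; split => r /=; rewrite in_itv /=.
      by case: ifP => // /negbT ne [] /negbT; rewrite -leNgt lt_neqAle ne => ->.
    by move=> h; rewrite lt_eqF // ltNge (ltW h).
  exact: measurable_itv.
- have -> : [set r : R | (if r == 1 then None else Some (1 < r)) = None] = [set 1].
    by apply/seteqP; split => r /=; [case: eqP|move=> ->; rewrite eqxx].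
  exact: measurable_set1.
Qed.

Lemma measurable_cell s : measurable (cell p s).
Proof.
have -> : cell p s =
  (\bigcap_(k in [set: 'I_K]) ((fun t : K.-tuple R => tnth t k) @^-1` `[0, +oo[%classic))
  `&` \bigcap_(j in [set: 'I_J]) [set x | side p j x = s j].
  apply/seteqP; split => x.
    move=> [nx hx]; split => i _ /=; last exact: hx.
    by rewrite in_itv /= andbT; exact: nx.
  move=> [h1 h2]; split.
    by move=> k; have := h1 k I; rewrite /= in_itv /= andbT.
  by move=> j; exact: (h2 j I).
apply: measurableI.
  apply: fin_bigcap_measurable => // k _; apply: measurable_preT.
  exact: measurable_itv.
by apply: fin_bigcap_measurable => // j _; exact: measurable_side.
Qed.

Lemma measurable_E sel : measurable (E sel).
Proof. apply: measurable_box => j; exact: measurable_cell. Qed.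

Lemma cell_sig s x : cell p s x -> s = sig x.
Proof. by move=> [_ h]; apply/ffunP => j; rewrite ffunE h. Qed.

Arguments cell_sig {s x}.

Lemma cell_disj s s' : s != s' -> cell p s `&` cell p s' = set0.
Proof.
move=> ne; apply/seteqP; split => // x [/cell_sig h1 /cell_sig h2].
by move: ne; rewrite h1 h2 eqxx.
Qed.

Lemma E_disj (c c' : colT p y) : c != c' -> E (val c) `&` E (val c') = set0.
Proof.
move=> ne; apply/seteqP; split => // dd [h1 h2].
have : val c = val c'.
  apply/ffunP => j; rewrite (cell_sig (h1 j)) (cell_sig (h2 j)) //.
by move=> /val_inj e; move: ne; rewrite e eqxx.
Qed.

Lemma side_None j x : side p j x = None -> dot (p j) x = 1.
Proof. by rewrite /side; case: eqP. Qed.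

Lemma patch_onb_budget j s x : patch_onb p j s -> cell p s x -> budget p j x.
Proof.
move=> /andP [/eqP sj _] [nx hx]; split => //; apply: side_None.
by rewrite hx sj.
Qed.

Arguments patch_onb_budget {j s x}.

Lemma patch_onb_is_patch j s : patch_onb p j s -> is_patch p s.
Proof. by move=> /andP [/eqP sj /asboolP ne]; split => //; exists j. Qed.

Arguments patch_onb_is_patch {j s}.

Lemma colT_onb (c : colT p y) j : patch_onb p j (val c j).
Proof. by have /andP [/forallP h _] := valP c; exact: h. Qed.

Lemma colT_rat (c : colT p y) : rationalizable p [tuple y (val c j) | j < J].
Proof. by have /andP [_ /asboolP h] := valP c. Qed.

Lemma E_rat (c : colT p y) dd : E (val c) dd -> rationalizable p dd.
Proof.
move=> hE; apply: (@transfer R K J p hK hp _ _ (colT_rat c)).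
  by move=> j; apply: (patch_onb_budget (colT_onb c j)); exact: hE.
move=> i j; rewrite tnth_mktuple.
have [_ h1] := hE i.
have [_ h2] := hy _ (patch_onb_is_patch (colT_onb c i)).
by rewrite h1 h2.
Qed.

Lemma rat_cover dd : rationalizable p dd -> exists c : colT p y, E (val c) dd.
Proof.
move=> rd; have rd' := rd; case: rd' => u [_ hu].
pose sel := [ffun j => sig (tnth dd j)].
have onb j : patch_onb p j (sel j).
  have [[nx dx] _] := hu j.
  apply/andP; split.
    by rewrite ffunE ffunE /side dx eqxx.
  apply/asboolP; exists (tnth dd j); split => // i; by rewrite !ffunE.
have ok : [forall j, patch_onb p j (sel j)] &&
          `[< rationalizable p [tuple y (sel j) | j < J] >].
  apply/andP; split; first by apply/forallP.
  apply/asboolP; apply: (@transfer R K J p hK hp _ _ rd).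
    move=> j; rewrite tnth_mktuple.
    exact: (patch_onb_budget (onb j) (hy _ (patch_onb_is_patch (onb j)))).
  move=> i j; rewrite tnth_mktuple.
  have [_ h] := hy _ (patch_onb_is_patch (onb i)).
  by rewrite h !ffunE.
exists (exist _ sel ok) => j /=.
have [[nx _] _] := hu j.
by split => // i; rewrite !ffunE.
Qed.

Arguments E_disj {c c'}.

Lemma A_key (Q : probability (demand R K J) R) (S : set (demand R K J)) :
  measurable S -> S `<=` rationalizable p -> Q S = 1%E ->
  forall X, measurable X -> Q X = (\sum_(c : colT p y) Q (X `&` E (val c)))%E.
Proof.
move=> mS Srat QS X mX.
have mXE (c : colT p y) : measurable (X `&` E (val c)) by apply: measurableI => //; exact: measurable_E.
have disj (c c' : colT p y) : c != c' -> (X `&` E (val c)) `&` (X `&` E (val c')) = set0.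
  by move=> ne; rewrite setIACA setIid (E_disj ne) setI0.
rewrite -(@mfin _ _ _ Q (colT p y) predT _ mXE disj).
set U := \bigcup_(c in _) _.
have mU : measurable U.
  by apply: fin_bigcup_measurable => // c _; exact: mXE.
apply/le_anti/andP; split; last first.
  by apply: le_measure; rewrite ?inE // => dd [c _ []].
have QC : Q (~` S) = 0%E by rewrite probability_setC // QS subee.
have h0 := @subset_measure0 _ _ _ Q (X `\` S) (~` S) (measurableD mX mS)
  (measurableC mS) (fun dd => @proj2 _ _) QC.
rewrite (measureDI Q mX mS) h0.
rewrite add0e; apply: le_measure; rewrite ?inE //; first exact: measurableI.
move=> dd [Xd Sd]; have [c hc] := rat_cover _ (Srat _ Sd).
by exists c => //.
Qed.

Lemma sum_colT (F : colT p y -> R) :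
  \sum_(h < ncols p y) F (@enum_val (colT p y) predT h) = \sum_(c : colT p y) F c.
Proof. by rewrite -(big_enum_val F). Qed.

Lemma partA (P : 'I_J -> probability (K.-tuple R) R) :
  stoch_rationalizable p P ->
  exists nu : 'cV[R]_(ncols p y),
       [/\ forall h, 0 <= nu h 0, \sum_h nu h 0 = 1 &
           vecrep p P = ratdemand p y *m nu].
Proof.
move=> [Q [hm [S [mS Srat QS]]]].
have key := @A_key Q S mS Srat QS.

have finQ A : measurable A -> Q A \is a fin_num by move=> mA; exact: fin_num_measure.
pose nu := \col_(h < ncols p y) fine (Q (E (val (@enum_val (colT p y) predT h)))).
exists nu; split.
- by move=> h; rewrite mxE fine_ge0 // measure_ge0.
- under eq_bigr => h _ do rewrite mxE.
  rewrite (sum_colT (fun c => fine (Q (E (val c))))).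
  rewrite sum_fine; last by move=> c _; apply: finQ; exact: measurable_E.
  under eq_bigr => c _ do rewrite -[E _]setTI.
  by rewrite -key // probability_setT.
apply/matrixP => i k; rewrite (ord1 k) !mxE.
set r := val (@enum_val _ predT i).
have hr : patch_onb p r.1 r.2 := valP (@enum_val _ predT i).
rewrite [LHS]/=.
rewrite -hm; last exact: measurable_cell.
rewrite key; last by apply: measurable_preT; exact: measurable_cell.
rewrite -sum_fine; last first.
  move=> c _; apply: finQ; apply: measurableI; last exact: measurable_E.
  by apply: measurable_preT; exact: measurable_cell.
under [RHS]eq_bigr => h _ do rewrite !mxE.
rewrite (sum_colT (fun c => (if val c r.1 == r.2 then 1 else 0) *
                        fine (Q (E (val c))))).
apply: eq_bigr => c _.
case: eqP => [e|ne]; rewrite ?mul1r ?mul0r.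
  congr (fine (Q _)); apply/seteqP; split => [dd []//|dd hd]; split => //.
  by rewrite /= -e; exact: hd.
have -> : (fun dd : demand R K J => tnth dd r.1) @^-1` cell p r.2 `&` E (val c) = set0.
  apply/seteqP; split => // dd [/= h1 h2]; apply: ne.
  by rewrite (cell_sig h1) (cell_sig (h2 r.1)).
by rewrite measure0.
Qed.
Lemma budget_cells j :
  budget p j = \bigcup_(s in [set` (fun s : signvec J => s j == None)]) cell p s.
Proof.
apply/seteqP; split => x.
  move=> [nx dx]; exists (sig x); last by split => // i; rewrite /sig ffunE.
  by rewrite /= /sig unfold_in /= ffunE /side dx eqxx.
move=> [s /= /eqP sj [nx hx]]; split => //; apply: side_None; by rewrite hx sj.
Qed.

Lemma margsum (Pj : probability (K.-tuple R) R) j B :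
  Pj (budget p j) = 1%E -> measurable B ->
  Pj B = (\sum_(s | patch_onb p j s) Pj (B `&` cell p s))%E.
Proof.
move=> Pb mB.
have mb : measurable (budget p j).
  rewrite budget_cells; apply: fin_bigcup_measurable => // s _.
  exact: measurable_cell.
have QC : Pj (~` budget p j) = 0%E by rewrite probability_setC // Pb subee.
have h0 := @subset_measure0 _ _ _ Pj (B `\` budget p j) (~` budget p j)
  (measurableD mB mb) (measurableC mb) (fun dd => @proj2 _ _) QC.
rewrite (measureDI Pj mB mb) h0 add0e.
rewrite {1}budget_cells setI_bigcupr.
transitivity (\sum_(s : signvec J | s j == None) Pj (B `&` cell p s))%E.
  apply: (@mfin _ _ _ Pj (signvec J) (fun s => s j == None) (fun s => B `&` cell p s)).
  - by move=> s; apply: measurableI => //; exact: measurable_cell.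
  - by move=> s s' ne; rewrite setIACA setIid cell_disj // setI0.
rewrite [RHS]big_mkcondr /=; apply: eq_bigr => s _.
case: asboolP => // ne.
have -> : B `&` cell p s = set0.
  apply/seteqP; split => // x [_ cx]; apply: ne; by exists x.
by rewrite measure0.
Qed.

Lemma sum_colT' (G : 'I_(ncols p y) -> R) :
  \sum_(h < ncols p y) G h = \sum_(c : colT p y) G (enum_rank c).
Proof.
rewrite -(sum_colT (fun c => G (enum_rank c))); apply: eq_bigr => h _.
by rewrite enum_valK.
Qed.

Section PartB.
Variable P : 'I_J -> probability (K.-tuple R) R.
Hypothesis hP : stoch_demand_system p P.
Variable nu : 'cV[R]_(ncols p y).
Hypothesis nu0 : forall h, 0 <= nu h 0.
Hypothesis hnu : vecrep p P = ratdemand p y *m nu.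
Hypothesis hJ : (0 < J)%N.

Let nuc (c : colT p y) := nu (enum_rank c) 0.
Let pr j s := fine (P j (cell p s)).

Let finP j A : measurable A -> P j A \is a fin_num.
Proof. by move=> mA; exact: fin_num_measure. Qed.

Let pr0 j s : 0 <= pr j s.
Proof. by rewrite /pr fine_ge0 // measure_ge0. Qed.

Let piE j s : patch_onb p j s -> pr j s = \sum_(c : colT p y | val c j == s) nuc c.
Proof.
move=> h; pose r : rowT p := exist _ (j, s) h.
have := congr1 (fun M : 'cV_(nrows p) => M (enum_rank r) 0) hnu.
rewrite !mxE enum_rankK /= /pr => ->.
rewrite sum_colT' [RHS]big_mkcond /=; apply: eq_bigr => c _.
by rewrite mxE !enum_rankK /=; case: ifP; rewrite ?mul1r ?mul0r.
Qed.

Let nuc0 (c : colT p y) : 0 <= nuc c.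
Proof. exact: nu0. Qed.

Let nuc_le (c : colT p y) j : nuc c <= pr j (val c j).
Proof.
rewrite (@piE j (val c j) (colT_onb c j)) (bigD1 c) //= lerDl.
by apply: sumr_ge0 => i _.
Qed.

Let nuc_zero (c : colT p y) : (exists i, pr i (val c i) = 0) -> nuc c = 0.
Proof.
move=> [i hi]; apply/le_anti; rewrite nuc0 andbT -hi; exact: nuc_le.
Qed.

Let w (c : colT p y) := nuc c / \prod_j pr j (val c j).

Let w0 c : 0 <= w c.
Proof. by apply: divr_ge0 => //; apply: prodr_ge0 => j _. Qed.

Let Pi := prodm (fun j => (P j : subprobability (K.-tuple R) R)).

Let mE' (c : colT p y) : measurable (E (val c)) := measurable_E (val c).

Let mix := mmix w Pi (fun c : colT p y => E (val c)) w0 mE'.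

Let qB j B s := fine (P j (B `&` cell p s)).

Let real_part j B : measurable B ->
  \sum_(c : colT p y) w c * \prod_i fine (P i (if i == j then B `&` cell p (val c i)
                                             else cell p (val c i)))
  = fine (P j B).
Proof.
move=> mB.
have step c : w c * \prod_i fine (P i (if i == j then B `&` cell p (val c i)
                                             else cell p (val c i)))
   = nuc c * (qB j B (val c j) / pr j (val c j)).
  rewrite (bigD1 j) //= eqxx.
  rewrite (eq_bigr (fun i => pr i (val c i))); last by move=> i /negbTE ->.
  rewrite /w (bigD1 j) //=.
  set a := pr j _; set b := \prod_(i | i != j) _; set q := qB _ _ _.
  have [D0|Dn0] := eqVneq (a * b) 0.
    rewrite D0 invr0 mulr0 mul0r nuc_zero ?mul0r //.
    move/eqP: D0; rewrite mulf_eq0 => /orP [/eqP a0|/prodf_eq0 [i _ /eqP bi]].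
      by exists j.
    by exists i.
  move: Dn0; rewrite mulf_eq0 negb_or => /andP [an0 bn0].
  rewrite /q /qB; field; by apply/andP.
rewrite (eq_bigr _ (fun c _ => step c)).
rewrite (partition_big (fun c : colT p y => val c j) (patch_onb p j)) /=; last first.
  by move=> c _; exact: colT_onb.
transitivity (\sum_(s | patch_onb p j s) qB j B s).
  apply: eq_bigr => s hs.
  rewrite (eq_bigr (fun c => (qB j B s / pr j s) * nuc c)); last first.
    by move=> c /eqP ->; rewrite mulrC.
  rewrite -mulr_sumr -piE //.
  have [e0|ne0] := eqVneq (pr j s) 0; last by rewrite divfK.
  rewrite e0 mulr0; apply/esym/le_anti; apply/andP; split; last first.
    by rewrite /qB fine_ge0 // measure_ge0.
  rewrite -e0 /qB /pr; apply: fine_le.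
  - apply: finP; apply: measurableI => //; exact: measurable_cell.
  - apply: finP; exact: measurable_cell.
  - apply: le_measure; last exact: subIsetr.
      by rewrite inE; apply: measurableI => //; exact: measurable_cell.
    by rewrite inE; exact: measurable_cell.
rewrite (@margsum (P j) j B (hP j) mB) /qB sum_fine // => s _.
apply: finP; apply: measurableI => //; exact: measurable_cell.
Qed.

Let mix_marg j B : measurable B ->
  mix ((fun dd : demand R K J => tnth dd j) @^-1` B) = P j B.
Proof.
move=> mB.
rewrite /mix /mmix.
have eB (c : colT p y) :
  Pi ((fun dd : demand R K J => tnth dd j) @^-1` B `&` E (val c)) =
  ((\prod_i fine (P i (if i == j then B `&` cell p (val c i)
                       else cell p (val c i)))))%:E.
  have -> : (fun dd : demand R K J => tnth dd j) @^-1` B `&` E (val c) =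
     box (fun i => if i == j then B `&` cell p (val c i) else cell p (val c i)).
    apply/seteqP; split => dd.
      move=> [/= hB hE] i; case: eqP => [->|_]; last exact: hE.
      by split => //; exact: hE.
    move=> h; split.
      by have := h j; rewrite eqxx => -[].
    move=> i; have := h i; case: eqP => [->|_] //; by case.
  rewrite prodm_box; last first.
    move=> i; case: eqP => _; last exact: measurable_cell.
    by apply: measurableI => //; exact: measurable_cell.
  rewrite -prodEFin; apply: eq_bigr => i _; rewrite fineK //.
  apply: finP; case: eqP => _; last exact: measurable_cell.
  by apply: measurableI => //; exact: measurable_cell.
transitivity (\sum_(c : colT p y) (w c * \prod_i fine (P i (if i == j then B `&` cell p (val c i)
                       else cell p (val c i))))%:E)%E.
  by apply: eq_bigr => c _; rewrite [in RHS]EFinM -eB.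
rewrite -[RHS]fineK; last exact: finP.
rewrite -real_part //.
first [by rewrite sumEFin | by rewrite -sumEFin | by rewrite raddf_sum | by rewrite -raddf_sum | idtac "none"].
Qed.

Let mix1 : mix setT = 1%E.
Proof.
have j0 : 'I_J := Ordinal hJ.
by rewrite -(preimage_setT (fun dd : demand R K J => tnth dd j0)) mix_marg // probability_setT.
Qed.

Lemma partB_main : stoch_rationalizable p P.
Proof.
pose d0 : demand R K J := [tuple p j | j < J].
pose Q := mnormalize mix (@dirac _ (demand R K J) d0 R).
have QE A : Q A = mix A.
  exact: mnormalizeE mix1.
exists Q; split.
  by move=> j B mB; apply: eq_trans (QE _) (mix_marg j B mB).
exists (\bigcup_(c in [set` (@predT (colT p y))]) E (val c)); split.
- by apply: fin_bigcup_measurable => // c _; exact: measurable_E.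
- by move=> dd [c _ h]; exact: (E_rat c dd h).
apply: eq_trans (QE _) _; rewrite -mix1 /mix /mmix; apply: eq_bigr => c _.
have -> : (\bigcup_(c in [set` (@predT (colT p y))]) E (val c)) `&` E (val c)
   = setT `&` E (val c).
  apply/seteqP; split => dd [h1 h2]; split => //.
  by exists c.
by [].
Qed.

End PartB.
End Main.

Theorem proposition2 (R : realType) (K J : nat)
  (hK : (0 < K)%N) (hJ : (0 < J)%N)
  (p : 'I_J -> K.-tuple R) (hp : forall j k, 0 < tnth (p j) k)
  (y : signvec J -> K.-tuple R)
  (hy : forall s, is_patch p s -> cell p s (y s))
  (P : 'I_J -> probability (K.-tuple R) R)
  (hP : stoch_demand_system p P) :
  (stoch_rationalizable p P <->
     exists nu : 'cV[R]_(ncols p y),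
       [/\ forall h, 0 <= nu h 0, \sum_h nu h 0 = 1 &
           vecrep p P = ratdemand p y *m nu]) /\
  (stoch_rationalizable p P <->
     exists nu : 'cV[R]_(ncols p y),
       (forall h, 0 <= nu h 0) /\ vecrep p P = ratdemand p y *m nu).
Proof.
have A := @partA R K J p hK hp y hy P.
have B := fun nu nu0 hnu => @partB_main R K J p hK hp y hy P hP nu nu0 hnu hJ.
split; split.
- exact: A.
- by move=> [nu [nu0 _ hnu]]; exact: B nu nu0 hnu.
- by move/A => [nu [nu0 _ hnu]]; exists nu.
- by move=> [nu [nu0 hnu]]; exact: B nu nu0 hnu.
Qed.
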